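(* Every $k$-uniform $(D,c,\epsilon)$-structure with $D\ge 1$ is a $(\lambda,p)_k$-structure for $\lambda=c$ and $p=D^{-\epsilon/k}$.
   Context: For a hypergraph $\mathcal{H}$, $\Delta_i(\mathcal{H})$ is the maximum number of edges containing a fixed vertex set of size $i$. For parameters $D,c>0$ and $0<\epsilon\le 1$, a $k$-uniform hypergraph $\mathcal{H}$ is a $(D,c,\epsilon)$-structure if (i) $|\mathcal{E}(\mathcal{H})|\ge D|V(\mathcal{H})|$, (ii) $\Delta_1(\mathcal{H})\le cD$, (iii) $\Delta_2(\mathcal{H})\le cD^{1-\epsilon}$. For $p\in(0,1]$: $w_p(\mathcal{H})=\sum_{E}p^{|E|}$; $\bar w_p(\mathcal{H})=w_p(\mathcal{H})/|V(\mathcal{H})|$; $\Delta_{i,p}(\mathcal{H})=\max_{|L|=i}\sum_{E\supseteq L}p^{|E|}$. A hypergraph is $k$-bounded if all edges have size at most $k$; it is a $(\lambda,p)_k$-structure if it is $k$-bounded with (1) $\bar w_p(\mathcal{H})\ge p$, (2) $\Delta_{1,p}(\mathcal{H})\le\lambda\bar w_p(\mathcal{H})$, (3) $\Delta_{2,p}(\mathcal{H})\le\lambda\bar w_p(\mathcal{H})p^k$. *)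

(* Defs.v *)
From HB Require Import structures.
From mathcomp Require Import all_boot all_order all_algebra.
From mathcomp Require Import reals exp.
Set Implicit Arguments. Unset Strict Implicit. Unset Printing Implicit Defensive.
Import Order.TTheory GRing.Theory Num.Theory.
Local Open Scope ring_scope.

(* A hypergraph on the finite vertex set V is given by its edge set
   E : {set {set V}}; V(H) = V. *)

Section Hyper.
Variable V : finType.

Definition Delta (i : nat) (E : {set {set V}}) : nat :=
  \max_(L : {set V} | #|L| == i) #|[set e in E | L \subset e]|.

Definition uniform (k : nat) (E : {set {set V}}) : Prop :=
  forall e, e \in E -> #|e| = k.

Definition bounded (k : nat) (E : {set {set V}}) : Prop :=
  forall e, e \in E -> (#|e| <= k)%N.

Variable R : realType.

Definition wp (p : R) (E : {set {set V}}) : R := \sum_(e in E) p ^+ #|e|.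

Definition wbar (p : R) (E : {set {set V}}) : R := wp p E / #|V|%:R.

(* Delta_{i,p}(H) = max_{|L|=i} sum_{E ⊇ L} p^|E|  (all terms are >= 0) *)
Definition Deltap (i : nat) (p : R) (E : {set {set V}}) : R :=
  \big[Num.max/0]_(L : {set V} | #|L| == i) \sum_(e in E | L \subset e) p ^+ #|e|.

(* (D,c,eps)-structure (k-uniformity is stated separately) *)
Definition Dce_structure (D c eps : R) (E : {set {set V}}) : Prop :=
  [/\ D * #|V|%:R <= #|E|%:R,
      (Delta 1 E)%:R <= c * D &
      (Delta 2 E)%:R <= c * powR D (1 - eps)].

Definition lp_structure (k : nat) (lam p : R) (E : {set {set V}}) : Prop :=
  [/\ 0 < p <= 1, bounded k E,
      p <= wbar p E,
      Deltap 1 p E <= lam * wbar p E &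
      Deltap 2 p E <= lam * wbar p E * p ^+ k].
End Hyper.

(* Main.v *)
Require Import Defs.
From HB Require Import structures.
From mathcomp Require Import all_boot all_order all_algebra.
From mathcomp Require Import reals exp.
From mathcomp Require Import ring lra.
Import Order.TTheory GRing.Theory Num.Theory.
Local Open Scope ring_scope.

Theorem lemma3p4 (R : realType) (V : finType) (E : {set {set V}}) (k : nat)
    (D c eps : R) :
  (0 < k)%N -> (0 < #|V|)%N ->
  0 < D -> 0 < c -> 0 < eps <= 1 -> 1 <= D ->
  uniform k E -> Dce_structure D c eps E ->
  lp_structure k c (powR D (- (eps / k%:R))) E.
Proof.
move=> k0 V0 D0 c0 /andP[e0 e1] D1 unif [hE h1 h2].
set p := powR D (- (eps / k%:R)).
set q := powR D (- eps).
have p0 : 0 <= p by apply: powR_ge0.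
have q0 : 0 <= q by apply: powR_ge0.
have kR : k%:R != 0 :> R by rewrite pnatr_eq0 -lt0n.
have hq : p ^+ k = q.
  rewrite -powR_mulrn // -powRrM /q; congr (powR D _); field; exact: kR.
have hsum : forall L : {set V},
    \sum_(e in E | L \subset e) p ^+ #|e| = #|[set e in E | L \subset e]|%:R * q.
  move=> L; rewrite (eq_bigr (fun=> p ^+ k)); last first.
    by move=> e /andP[eE _]; rewrite unif.
  by rewrite -big_set sumr_const hq mulr_natl.
have hwp : wp p E = #|E|%:R * q.
  rewrite /wp (eq_bigr (fun=> p ^+ k)); last by move=> e eE; rewrite unif.
  by rewrite sumr_const hq mulr_natl.
have hDp : forall i, Deltap i p E <= (Delta i E)%:R * q.
  move=> i; rewrite /Deltap.
  elim/big_rec: _ => [|L m HL IH]; first by rewrite mulr_ge0.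
  rewrite ge_max IH andbT hsum ler_wpM2r // ler_nat.
  rewrite /Delta; exact: (leq_bigmax_cond _ HL).
have n0 : 0 < #|V|%:R :> R by rewrite ltr0n.
have hw : D * q <= wbar p E.
  rewrite /wbar hwp ler_pdivlMr // mulrAC ler_wpM2r //.
have hDq : D * q = powR D (1 - eps).
  rewrite powRD ?powRr1 ?ltW //; apply/implyP => _; by rewrite gt_eqF.
have Dq1 : 1 <= D * q.
  rewrite hDq; have := @ler_powR _ D D1 0 (1 - eps); rewrite powRr0; apply; by rewrite subr_ge0.
have p1 : p <= 1.
  rewrite /p; have := @ler_powR _ D D1 (- (eps / k%:R)) 0; rewrite powRr0; apply; rewrite oppr_le0; apply: divr_ge0; [exact: ltW | exact: ler0n].
have pgt0 : 0 < p by apply: powR_gt0.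
split.
- by rewrite pgt0 p1.
- by move=> e eE; rewrite unif.
- by apply: le_trans p1 (le_trans Dq1 hw).
- apply: le_trans (hDp 1%N) _.
  apply: le_trans (ler_wpM2r q0 h1) _.
  by rewrite -mulrA; apply: ler_wpM2l => //; exact: ltW.
- apply: le_trans (hDp 2%N) _.
  apply: le_trans (ler_wpM2r q0 h2) _.
  rewrite -hDq hq -mulrA -[X in X <= _]mulrA; apply: ler_wpM2l; first exact: ltW.
  exact: (ler_wpM2r q0 hw).
Qed.
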